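(* Let $\mathcal Z=(Z\to\mathbf P_{M/m})$, $\mathcal Y=(Y\to\mathbf P_{L/l})$, $\mathcal X=(X\to\mathbf P_{K/k})$ be objects of $\mathrm{bir}_G$ and let $h\colon\mathcal Z\to\mathcal Y$, $g\colon\mathcal Y\to\mathcal X$ be morphisms, $f=g\circ h$. Then: (1) if $g$ and $h$ are separated, $f$ is separated; (2) if $f$ is separated, $h$ is separated; (3) if $g$ and $h$ are proper, $f$ is proper; (4) if $f$ and $h$ are proper, $g$ is proper; (5) if $f$ is proper, $g$ is separated and $\psi_{M/m,L/l}$ is surjective (e.g. $m=l$), then $h$ is proper; (6) if $f$ is separated and $h$ is proper, then $g$ is separated.
   Context: $G$ is a commutative multiplicative group. Graded fields: nonzero $G$-graded rings whose nonzero homogeneous elements are invertible. For graded fields $k\subseteq K$, $\mathbf P_{K/k}$ is the set of graded valuation rings $\mathcal O$ of $K$ containing $k$ (graded subrings such that $f\in\mathcal O$ or $f^{-1}\in\mathcal O$ for each nonzero homogeneous $f\in K$), with topology generated by $\{\mathcal O: f_1,\dots,f_n\in\mathcal O\}$, $f_i$ homogeneous. An object of $\mathrm{bir}_G$ is $(X\to\mathbf P_{K/k})$ for some graded field extension $K/k$, with $X\to\mathbf P_{K/k}$ a local homeomorphism from a non-empty connected quasi-compact quasi-separated space. A morphism $(Y\to\mathbf P_{L/l})\to(X\to\mathbf P_{K/k})$ consists of compatible graded embeddings $k\hookrightarrow l$, $K\hookrightarrow L$ (compatible with $k\subseteq K$, $l\subseteq L$) and a continuous map $Y\to X$ compatible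 with $\psi_{L/l,K/k}\colon\mathbf P_{L/l}\to\mathbf P_{K/k}$, $\mathcal O\mapsto\mathcal O\cap K$. It is separated if $Y\to X\times_{\mathbf P_{K/k}}\mathbf P_{L/l}$ is injective, and proper if this map is bijective and $\psi_{L/l,K/k}$ is surjective. *)

(* Defs.v *)
From HB Require Import structures.
From mathcomp Require Import all_boot all_algebra.
From mathcomp Require Import boolp classical_sets topology.
Set Implicit Arguments. Unset Strict Implicit. Unset Printing Implicit Defensive.
Import GRing.Theory.
Local Open Scope ring_scope.
Local Open Scope classical_set_scope.

(* The grading group G is a commutative group, written ADDITIVELY as a
   zmodType (so the identity of G is 0 and the group law is +). *)

Section Graded.
Variable G : zmodType.

(* D g = the homogeneous component of degree g of the commutative ring R. *)
Definition is_grading (R : comPzRingType) (D : G -> set R) : Prop :=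
  [/\ (forall g, D g 0 /\ (forall x y, D g x -> D g y -> D g (x - y))),
      D 0 1,
      (forall g h x y, D g x -> D h y -> D (g + h) (x * y)),
      (forall x : R, exists s : seq (G * R),
          [/\ uniq (unzip1 s), (forall p, p \in s -> D p.1 p.2) &
              x = \sum_(p <- s) p.2]) &
      (* ... in a unique way (the sum R = (+)_g D g is direct) *)
      (forall s : seq (G * R), uniq (unzip1 s) ->
          (forall p, p \in s -> D p.1 p.2) ->
          \sum_(p <- s) p.2 = 0 -> forall p, p \in s -> p.2 = 0)].

Definition homog (R : comPzRingType) (D : G -> set R) (x : R) : Prop :=
  exists g, D g x.

Definition is_graded_field (R : comPzRingType) (D : G -> set R) : Prop :=
  [/\ is_grading D, (1 : R) != 0 &
      forall x : R, homog D x -> x != 0 -> exists y, x * y = 1].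

Definition is_graded_embedding (R S : comPzRingType) (DR : G -> set R)
    (DS : G -> set S) (s : R -> S) : Prop :=
  [/\ (forall x y, s (x - y) = s x - s y),
      (forall x y, s (x * y) = s x * s y),
      s 1 = 1,
      injective s &
      (forall g x, DR g x -> DS g (s x))].

Definition is_graded_subring (K : comPzRingType) (DK : G -> set K)
    (O : set K) : Prop :=
  [/\ O 1, (forall x y, O x -> O y -> O (x - y)),
      (forall x y, O x -> O y -> O (x * y)) &
      (forall x, O x -> exists s : seq (G * K),
          (forall p, p \in s -> DK p.1 p.2 /\ O p.2) /\
          x = \sum_(p <- s) p.2)].

(* graded valuation ring of K containing k (k embedded in K via i) *)
Definition is_gvr (k K : comPzRingType) (DK : G -> set K) (i : k -> K)
    (O : set K) : Prop :=
  [/\ is_graded_subring DK O,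
      (forall f, homog DK f -> f != 0 ->
          O f \/ exists f', f * f' = 1 /\ O f') &
      (forall a, O (i a))].

Definition Pspace (k K : comPzRingType) (DK : G -> set K) (i : k -> K) :=
  {O : set K | is_gvr DK i O}.

(* open sets of P_{K/k}: unions of basic opens {O | f_1, ..., f_n in O},
   f_i homogeneous *)
Definition Popen (k K : comPzRingType) (DK : G -> set K) (i : k -> K)
    (S : set (Pspace DK i)) : Prop :=
  forall O, S O -> exists fs : seq K,
    [/\ (forall f, f \in fs -> homog DK f),
        (forall f, f \in fs -> sval O f) &
        (forall O' : Pspace DK i, (forall f, f \in fs -> sval O' f) -> S O')].

Definition local_homeo (X : topologicalType) (k K : comPzRingType)
    (DK : G -> set K) (i : k -> K) (p : X -> Pspace DK i) : Prop :=
  (forall S, Popen S -> open (p @^-1` S)) /\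
  (forall x, exists U : set X,
     [/\ open U, U x,
         (forall x1 x2, U x1 -> U x2 -> p x1 = p x2 -> x1 = x2) &
         (forall V, open V -> V `<=` U -> Popen (p @` V))]).

Definition quasi_separated (X : topologicalType) : Prop :=
  forall U V : set X, open U -> compact U -> open V -> compact V ->
    compact (U `&` V).

Record birObj := BirObj {
  bk : comPzRingType;  Dk : G -> set bk;
  bK : comPzRingType;  DK : G -> set bK;
  bi : bk -> bK;
  bX : topologicalType;
  bpi : bX -> Pspace DK bi;
  bk_field : is_graded_field Dk;
  bK_field : is_graded_field DK;
  bi_emb : is_graded_embedding Dk DK bi;
  bpi_lh : local_homeo bpi;
  bX_nonempty : [set: bX] !=set0;
  bX_connected : connected [set: bX];
  bX_qc : compact [set: bX];
  bX_qs : quasi_separated bX }.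
Arguments Dk : clear implicits.
Arguments DK : clear implicits.
Arguments bi : clear implicits.
Arguments bpi : clear implicits.

(* morphism data (sk, sK, b) : Yo -> Xo, with sk : k -> l, sK : K -> L,
   b : Y -> X ;  psi_{L/l,K/k}(O) = O cap K = sK^{-1}(O) *)
Definition is_bir_mor (Yo Xo : birObj) (sk : bk Xo -> bk Yo)
    (sK : bK Xo -> bK Yo) (b : bX Yo -> bX Xo) : Prop :=
  [/\ is_graded_embedding (Dk Xo) (Dk Yo) sk,
      is_graded_embedding (DK Xo) (DK Yo) sK,
      (forall a, sK (bi Xo a) = bi Yo (sk a)),
      continuous b &
      (forall y, sval (bpi Xo (b y)) = sK @^-1` sval (bpi Yo y))].

Definition psi_surj (Yo Xo : birObj) (sK : bK Xo -> bK Yo) : Prop :=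
  forall O' : Pspace (DK Xo) (bi Xo),
    exists O : Pspace (DK Yo) (bi Yo), sval O' = sK @^-1` sval O.

(* Y -> X x_{P_{K/k}} P_{L/l},  y |-> (b y, pi_Y y)  is injective *)
Definition bir_separated (Yo Xo : birObj) (sK : bK Xo -> bK Yo)
    (b : bX Yo -> bX Xo) : Prop :=
  forall y1 y2, b y1 = b y2 -> bpi Yo y1 = bpi Yo y2 -> y1 = y2.

(* the map above is bijective, and psi_{L/l,K/k} is surjective *)
Definition bir_proper (Yo Xo : birObj) (sK : bK Xo -> bK Yo)
    (b : bX Yo -> bX Xo) : Prop :=
  [/\ bir_separated sK b,
      (forall (x : bX Xo) (O : Pspace (DK Yo) (bi Yo)),
          sval (bpi Xo x) = sK @^-1` sval O ->
          exists y, b y = x /\ bpi Yo y = O) &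
      psi_surj sK].
End Graded.

(* Main.v *)
Require Import Defs.
From HB Require Import structures.
From mathcomp Require Import all_boot all_algebra.
From mathcomp Require Import boolp classical_sets topology.
Set Implicit Arguments. Unset Strict Implicit. Unset Printing Implicit Defensive.
Import GRing.Theory.
Local Open Scope ring_scope.
Local Open Scope classical_set_scope.

Section Aux.
Variable G : zmodType.

Lemma sum_closed (R : comPzRingType) (P : set R) :
  P 0 -> (forall x y, P x -> P y -> P (x - y)) ->
  forall (I : eqType) (r : seq I) (Q : pred I) (F : I -> R),
  (forall i, i \in r -> Q i -> P (F i)) -> P (\sum_(i <- r | Q i) F i).
Proof.
move=> P0 PB I r Q F HF; rewrite big_seq_cond; apply: big_ind => //; last first.
  by move=> i /andP [] /HF.
move=> x y Px Py; have := PB x (0 - y) Px (PB 0 y P0 Py).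
by rewrite sub0r opprK.
Qed.

Lemma sum_uniq_pick (R : comPzRingType) (t : seq (G * R)) (p : G * R) :
  uniq (unzip1 t) -> p \in t -> \sum_(q <- t | q.1 == p.1) q.2 = p.2.
Proof.
elim: t => [|q t IH] //= /andP [nq ut]; rewrite in_cons => /orP [/eqP ->|pt].
  rewrite big_cons eqxx big1_seq ?addr0 // => q' /andP [/eqP e q't].
  by case/negP: nq; rewrite -e; apply/mapP; exists q'.
rewrite big_cons ifF ?IH //; apply/negP => /eqP e.
by case/negP: nq; rewrite e; apply/mapP; exists p.
Qed.

Lemma comp_in_O (R : comPzRingType) (D : G -> set R) (O : set R) :
  is_grading D -> is_graded_subring D O ->
  forall t : seq (G * R), uniq (unzip1 t) -> (forall p, p \in t -> D p.1 p.2) ->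
  O (\sum_(p <- t) p.2) -> forall p, p \in t -> O p.2.
Proof.
move=> [Dsub _ _ _ Duniq] [O1 OB _ Odec] t ut Dt Ot p pt.
have O0 : O 0 by rewrite -(subrr 1); exact: OB.
have [s [Hs es]] := Odec _ Ot.
pose ds := undup (unzip1 t ++ unzip1 s).
pose c d := \sum_(q <- t | q.1 == d) q.2 - \sum_(q <- s | q.1 == d) q.2.
pose u := [seq (d, c d) | d <- ds].
have uu : uniq (unzip1 u) by rewrite /unzip1 -map_comp map_id undup_uniq.
have Du : forall q, q \in u -> D q.1 q.2.
  move=> q /mapP [d _ ->] /=; rewrite /c; apply: (Dsub d).2.
    apply: sum_closed; [exact: (Dsub d).1 | exact: (Dsub d).2 |].
    by move=> q' q't /eqP <-; apply: Dt.
  apply: sum_closed; [exact: (Dsub d).1 | exact: (Dsub d).2 |].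
  by move=> q' q's /eqP <-; exact: (Hs _ q's).1.
have uds : uniq ds by exact: undup_uniq.
have part : forall r : seq (G * R), (forall q, q \in r -> q.1 \in ds) ->
    \sum_(d <- ds) \sum_(q <- r | q.1 == d) q.2 = \sum_(q <- r) q.2.
  move=> r Hr; rewrite (exchange_big_dep xpredT) //= big_seq_cond [RHS]big_seq_cond.
  apply: eq_bigr => q /andP [qr _]; rewrite -big_filter.
  have -> : [seq d <- ds | q.1 == d] = [:: q.1].
    rewrite -(filter_pred1_uniq uds (Hr q qr)); apply: eq_filter => d /=.
    by rewrite eq_sym.
  by rewrite big_seq1.
have H0 : \sum_(q <- u) q.2 = 0.
  have pt2 : forall q, q \in t -> q.1 \in ds.
    by move=> q qt; rewrite mem_undup mem_cat map_f.
  have ps : forall q, q \in s -> q.1 \in ds.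
    by move=> q qs; rewrite mem_undup mem_cat; apply/orP; right; exact: map_f.
  by rewrite big_map /c sumrB (part t pt2) (part s ps) -es subrr.
have pu : (p.1, c p.1) \in u by rewrite map_f // mem_undup mem_cat map_f.
have /subr0_eq := Duniq u uu Du H0 _ pu.
rewrite sum_uniq_pick // => ->.
apply: sum_closed => //.
by move=> q' q's _; exact: (Hs _ q's).2.
Qed.

Lemma gvr_pre (k K l L : comPzRingType) (DK : G -> set K) (DL : G -> set L)
  (i : k -> K) (j : l -> L) (sK : K -> L) (sk : k -> l) :
  is_graded_field DK -> is_graded_field DL -> is_graded_embedding DK DL sK ->
  (forall a, sK (i a) = j (sk a)) ->
  forall O, is_gvr DL j O -> is_gvr DK i (sK @^-1` O).
Proof.
move=> [grK _ invK] [grL _ _] [sB sM s1 sinj sD] sij O [[O1 OB OM Odec] Oval Oj].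
have s0 : sK 0 = 0 by rewrite -(subrr 0) sB subrr.
have sA : forall x y, sK (x + y) = sK x + sK y.
  move=> x y; have -> : x + y = x - (0 - y) by rewrite sub0r opprK.
  by rewrite !sB s0 sub0r opprK.
split.
- split => //.
  + by rewrite /preimage /= s1.
  + by move=> x y Ox Oy; rewrite /preimage /= sB; apply: OB.
  + by move=> x y Ox Oy; rewrite /preimage /= sM; apply: OM.
  move=> x Ox; have [_ _ _ Kdec _] := grK.
  have [t [ut Dt xt]] := Kdec x.
  exists t; split => // p pt; split; first exact: Dt.
  pose t' := [seq (q.1, sK q.2) | q <- t].
  have ut' : uniq (unzip1 t') by rewrite /unzip1 -map_comp.
  have Dt' : forall q, q \in t' -> DL q.1 q.2.
    by move=> q /mapP [q0 q0t ->] /=; apply: sD; apply: Dt.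
  have Ot' : O (\sum_(q <- t') q.2).
    rewrite big_map -(big_morph sK sA s0) -xt; exact: Ox.
  have pt' : (p.1, sK p.2) \in t' by apply: (map_f (fun q => (q.1, sK q.2))).
  exact: (comp_in_O grL (And4 O1 OB OM Odec) ut' Dt' Ot' pt').
- move=> f [g Dg] f0.
  have sf0 : sK f != 0 by apply: contra f0 => /eqP e; apply/eqP/sinj; rewrite e s0.
  case: (Oval (sK f) (ex_intro _ g (sD _ _ Dg)) sf0) => [Of|[f'' [e Of'']]].
    by left.
  right; have [y fy] := invK f (ex_intro _ g Dg) f0.
  exists y; split => //; rewrite /preimage /=.
  have -> : sK y = f'' by rewrite -[f'']mulr1 -s1 -fy sM mulrA (mulrC f'') e mul1r.
  exact: Of''.
- by move=> a; rewrite /preimage /= sij.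
Qed.
End Aux.

Lemma Peq (G : zmodType) (k K : comPzRingType) (D : G -> set K) (i : k -> K)
  (O1 O2 : Pspace D i) : sval O1 = sval O2 -> O1 = O2.
Proof.
case: O1 O2 => [a pa] [b pb] /= e; subst b; congr exist; exact: Prop_irrelevance.
Qed.

Unset Implicit Arguments.
Theorem lemma7p2 (G : zmodType) (Zo Yo Xo : birObj G)
  (hk : bk Yo -> bk Zo) (hK : bK Yo -> bK Zo) (hb : bX Zo -> bX Yo)
  (gk : bk Xo -> bk Yo) (gK : bK Xo -> bK Yo) (gb : bX Yo -> bX Xo)
  (Hh : is_bir_mor hk hK hb) (Hg : is_bir_mor gk gK gb) :
  (* (1) *)
  (bir_separated gK gb -> bir_separated hK hb ->
     bir_separated (hK \o gK) (gb \o hb)) /\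
  (* (2) *)
  (bir_separated (hK \o gK) (gb \o hb) -> bir_separated hK hb) /\
  (* (3) *)
  (bir_proper gK gb -> bir_proper hK hb ->
     bir_proper (hK \o gK) (gb \o hb)) /\
  (* (4) *)
  (bir_proper (hK \o gK) (gb \o hb) -> bir_proper hK hb ->
     bir_proper gK gb) /\
  (* (5) *)
  (bir_proper (hK \o gK) (gb \o hb) -> bir_separated gK gb ->
     psi_surj hK -> bir_proper hK hb) /\
  (* (6) *)
  (bir_separated (hK \o gK) (gb \o hb) -> bir_proper hK hb ->
     bir_separated gK gb).
Proof.
move: (Hh) (Hg) => [_ hKe hki _ hpi] [_ gKe gki _ gpi].
pose pre (O : Pspace (@DK _ Zo) (@bi _ Zo)) : Pspace (@DK _ Yo) (@bi _ Yo) :=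
  exist _ (hK @^-1` sval O)
    (gvr_pre (bK_field Yo) (bK_field Zo) hKe hki (svalP O)).
have fpi : forall z, sval (@bpi _ Xo (gb (hb z))) =
    (hK \o gK) @^-1` sval (@bpi _ Zo z).
  by move=> z; rewrite gpi hpi.
have sep1 : bir_separated gK gb -> bir_separated hK hb ->
     bir_separated (hK \o gK) (gb \o hb).
  move=> sg sh z1 z2 /= e1 e2; apply: sh => //; apply: sg => //.
  by apply: Peq; rewrite !hpi e2.
have sep2 : bir_separated (hK \o gK) (gb \o hb) -> bir_separated hK hb.
  by move=> sf z1 z2 e1 e2; apply: sf => //=; rewrite e1.
have sep6 : bir_separated (hK \o gK) (gb \o hb) -> bir_proper hK hb ->
     bir_separated gK gb.
  move=> sf [sh lh ph] y1 y2 e1 e2.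
  have [O HO] := ph (@bpi _ Yo y1).
  have [z1 [hz1 pz1]] := lh y1 O HO.
  have [z2 [hz2 pz2]] := lh y2 O ltac:(by rewrite -e2).
  rewrite -hz1 -hz2; congr hb; apply: sf => /=; first by rewrite hz1 hz2.
  by rewrite pz1 pz2.
split => //; split => //.
split.
  move=> [sg lg pg] [sh lh ph]; split.
  - exact: sep1.
  - move=> x O HO.
    have [y [gy py]] := lg x (pre O) HO.
    have [z [hz pz]] := lh y O ltac:(by rewrite py).
    by exists z; rewrite /= hz gy.
  - move=> O; have [O1 e1] := pg O; have [O2 e2] := ph O1.
    by exists O2; rewrite e1 e2.
split.
  move=> [sf lf pf] [sh lh ph]; split.
  - by apply: sep6 => //; split.
  - move=> x O HO; have [O2 e2] := ph O.
    have [z [fz pz]] := lf x O2 ltac:(by rewrite HO e2).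
    exists (hb z); split => //; apply: Peq; by rewrite hpi pz e2.
  - move=> O; have [O2 e2] := pf O; exists (pre O2); exact: e2.
split => //.
move=> [sf lf pf] sg ph; split.
- exact: sep2.
- move=> y O HO.
  have [z [fz pz]] := lf (gb y) O ltac:(by rewrite gpi HO).
  exists z; split => //; apply: sg => //; apply: Peq; by rewrite hpi pz HO.
- exact: ph.
Qed.
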